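(* Let $G$ be a group acting without inversions on a tree $T$, let $H$ be a tame subgroup of $G$ containing hyperbolic elements, and let $\widetilde{X}$ be the graph obtained from $X=T_{H}/H$ by attaching a loop at each $H$-non-degenerate vertex. Then $$\overline{C}_{T}(H)=\overline{r}(\widetilde{X})=\frac{1}{2}\sum\big(\deg_{\widetilde{X}}([v]_{H})-2\big),$$ where the sum is over all vertices $[v]_{H}$ of $\widetilde{X}$.
   Context: $T_H$ is the unique minimal $H$-invariant subtree of $T$; $H$ tame with a hyperbolic element means $T_H/H$ is finite. A vertex $v$ of $T_H$ is $H$-degenerate if $H_v=H_e$ for some edge $e$ of $T_H$ with initial vertex $v$; otherwise $[v]_H$ is non-degenerate. $C_T(H)=r(T_H/H)+|V_{ndeg}(T_H/H)|$ (rank of the fundamental group plus number of non-degenerate vertices; this equals $r(T/H)+|V_{ndeg}(T/H)|$), and $\overline{C}_T(H)=\max\{C_T(H)-1,0\}$. For a finite connected graph $Y$, $\overline{r}(Y)=\max\{r(Y)-1,0\}$ where $r(Y)$ is the rank of its fundamental group. $\deg_{\widetilde X}(w)$ is the number of (oriented) edges with initial vertex $w$, so an attached loop contributes $2$. *)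

(* Defs.v *)
From HB Require Import structures.
From mathcomp Require Import all_boot all_order all_algebra.
Set Implicit Arguments. Unset Strict Implicit. Unset Printing Implicit Defensive.
Import Order.TTheory GRing.Theory Num.Theory.
Local Open Scope ring_scope.

Record group := Group {
  gT :> Type;
  gmul : gT -> gT -> gT;
  gone : gT;
  ginv : gT -> gT }.

Definition is_group (G : group) : Prop :=
  [/\ forall x y z : G, gmul x (gmul y z) = gmul (gmul x y) z,
      forall x : G, gmul (gone G) x = x,
      forall x : G, gmul x (gone G) = x,
      forall x : G, gmul (ginv x) x = gone G
    & forall x : G, gmul x (ginv x) = gone G].

Definition is_subgroup (G : group) (H : G -> Prop) : Prop :=
  [/\ H (gone G), forall x y, H x -> H y -> H (gmul x y)
    & forall x, H x -> H (ginv x)].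

(* Serre graphs: vertices, oriented edges, origin, edge reversal.      *)
Record sgraph := SGraph {
  sV : Type;
  sE : Type;
  so : sE -> sV;
  sbar : sE -> sE }.

Definition sterm (T : sgraph) (e : sE T) : sV T := so (sbar e).

Definition is_sgraph (T : sgraph) : Prop :=
  (forall e : sE T, sbar (sbar e) = e) /\ (forall e : sE T, sbar e <> e).

Fixpoint epath (T : sgraph) (u v : sV T) (p : list (sE T)) : Prop :=
  match p with
  | nil => u = v
  | e :: p' => so e = u /\ epath (sterm e) v p'
  end.

Fixpoint reduced (T : sgraph) (p : list (sE T)) : Prop :=
  match p with
  | e1 :: ((e2 :: _) as p') => e2 <> sbar e1 /\ reduced p'
  | _ => True
  end.

Definition is_tree (T : sgraph) : Prop :=
  [/\ is_sgraph T,
      (forall u v : sV T, exists p, epath u v p)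
    & (forall (u : sV T) p, p <> nil -> epath u u p -> ~ reduced p)].

Record gaction (G : group) (T : sgraph) := GAction {
  actV : G -> sV T -> sV T;
  actE : G -> sE T -> sE T }.

Definition is_action (G : group) (T : sgraph) (a : gaction G T) : Prop :=
  (forall v, actV a (gone G) v = v) /\
  (forall e, actE a (gone G) e = e) /\
  (forall g h v, actV a (gmul g h) v = actV a g (actV a h v)) /\
  (forall g h e, actE a (gmul g h) e = actE a g (actE a h e)) /\
  (forall g e, actV a g (so e) = so (actE a g e)) /\
  (forall g e, actE a g (sbar e) = sbar (actE a g e)).

Definition without_inversions (G : group) (T : sgraph) (a : gaction G T) : Prop :=
  forall g e, actE a g e <> sbar e.

(* hyperbolic element (for an action without inversions): fixes no vertex *)
Definition hyperbolic (G : group) (T : sgraph) (a : gaction G T) (g : G) : Prop :=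
  forall v, actV a g v <> v.

Fixpoint all_prop (A : Type) (P : A -> Prop) (s : list A) : Prop :=
  match s with nil => True | x :: s' => P x /\ all_prop P s' end.

(* Subtrees, given by their vertex sets (edges: both endpoints inside). *)
Definition sub_edge (T : sgraph) (S : sV T -> Prop) (e : sE T) : Prop :=
  S (so e) /\ S (sterm e).

Definition is_subtree (T : sgraph) (S : sV T -> Prop) : Prop :=
  (exists v, S v) /\
  (forall u v, S u -> S v -> exists p, epath u v p /\ all_prop (sub_edge S) p).

Definition invariant_subtree (G : group) (T : sgraph) (a : gaction G T)
    (H : G -> Prop) (S : sV T -> Prop) : Prop :=
  is_subtree S /\ forall h v, H h -> S v -> S (actV a h v).

Definition minimal_invariant_subtree (G : group) (T : sgraph) (a : gaction G T)
    (H : G -> Prop) (S : sV T -> Prop) : Prop :=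
  invariant_subtree a H S /\
  forall S', invariant_subtree a H S' -> (forall v, S' v -> S v) ->
             forall v, S v -> S' v.

(* H-degenerate vertex of T_H = S: H_v = H_e for some edge e of S with origin v
   (H_e <= H_v always, so equality amounts to the stated equivalence). *)
Definition degenerate (G : group) (T : sgraph) (a : gaction G T)
    (H : G -> Prop) (S : sV T -> Prop) (v : sV T) : Prop :=
  exists e, sub_edge S e /\ so e = v /\
    forall h, H h -> (actV a h v = v <-> actE a h e = e).

Record fingraphT := FGraph {
  fV : finType;
  fE : finType;
  fo : fE -> fV;
  fbar : fE -> fE }.

(* rank of the fundamental group of a finite connected graph:
   #(geometric edges) - #vertices + 1 *)
Definition frank (Y : fingraphT) : rat := #|fE Y|%:R / 2 - #|fV Y|%:R + 1.
Definition frankbar (Y : fingraphT) : rat := Num.max (frank Y - 1) 0.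

Definition fdeg (Y : fingraphT) (w : fV Y) : nat := #|[set e | fo e == w]|.

(* X is (isomorphic to) the quotient graph S/H, via projections pV, pE *)
Definition is_quotient (G : group) (T : sgraph) (a : gaction G T)
    (H : G -> Prop) (S : sV T -> Prop) (X : fingraphT)
    (pV : sV T -> fV X) (pE : sE T -> fE X) : Prop :=
  (forall e, sub_edge S e -> fo (pE e) = pV (so e)) /\
  (forall e, sub_edge S e -> fbar (pE e) = pE (sbar e)) /\
  (forall x, exists v, S v /\ pV v = x) /\
  (forall y, exists e, sub_edge S e /\ pE e = y) /\
  (forall v w, S v -> S w ->
     (pV v = pV w <-> exists h, H h /\ actV a h w = v)) /\
  (forall e f, sub_edge S e -> sub_edge S f ->
     (pE e = pE f <-> exists h, H h /\ actE a h f = e)).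

Definition CT (X : fingraphT) (nd : pred (fV X)) : rat := frank X + #|nd|%:R.
Definition CTbar (X : fingraphT) (nd : pred (fV X)) : rat := Num.max (@CT X nd - 1) 0.

(* X~ : attach a loop (a pair of mutually inverse oriented edges) at every
   vertex in nd *)
Definition loopE (X : fingraphT) (nd : pred (fV X)) : finType :=
  (fE X + ({x : fV X | nd x} * bool))%type.

Definition attach_loops (X : fingraphT) (nd : pred (fV X)) : fingraphT :=
  @FGraph (fV X) (@loopE X nd)
    (fun e => match e with inl e' => fo e' | inr (x, _) => val x end)
    (fun e => match e with inl e' => inl (fbar e') | inr (x, b) => inr (x, ~~ b) end).

(* Main.v *)
From Stdlib Require Import Classical.
Require Import Defs.
From HB Require Import structures.
From mathcomp Require Import all_boot all_order all_algebra.
From mathcomp Require Import ring lra.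
Import Order.TTheory GRing.Theory Num.Theory.
Local Open Scope ring_scope.

Lemma sum_fdeg (Y : fingraphT) : (\sum_(x : fV Y) fdeg x = #|fE Y|)%N.
Proof.
rewrite -sum1_card (partition_big (@fo Y) xpredT) //=.
apply: eq_bigr => x _; rewrite /fdeg -sum1_card.
by apply: eq_bigl => e; rewrite inE.
Qed.

Lemma card_loopE (X : fingraphT) (nd : pred (fV X)) :
  #|@loopE X nd| = (#|fE X| + #|nd| * 2)%N.
Proof.
rewrite /loopE card_sum card_prod card_bool; congr (_ + _)%N.
by rewrite card_sig.
Qed.

Lemma alg_part (X : fingraphT) (nd : pred (fV X)) :
  (forall x, ~~ nd x -> (1 < fdeg x)%N) ->
  @CTbar X nd = frankbar (@attach_loops X nd) /\
  frankbar (@attach_loops X nd) =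
    2^-1 * \sum_(x : fV (@attach_loops X nd)) ((fdeg x)%:R - 2).
Proof.
move=> hdeg.
have ineq : (2 * #|fV X| <= #|fE X| + #|nd| * 2)%N.
  have -> : (#|nd| = \sum_(x : fV X) (nd x : nat))%N.
    rewrite -sum1_card big_mkcond /=; apply: eq_bigr => x _.
    by rewrite unfold_in; case: (nd x).
  rewrite -sum_fdeg mulnC -sum_nat_const big_distrl /= -big_split /=.
  apply: leq_sum => x _; case ndx: (nd x) => /=; first by rewrite mul1n leq_addl.
  by rewrite mul0n addn0; apply: hdeg; rewrite ndx.
have eCT : @CT X nd = frank (@attach_loops X nd).
  rewrite /CT /frank /= card_loopE natrD natrM; by field.
have esum : \sum_(x : fV (@attach_loops X nd)) ((fdeg x)%:R - 2) =
    (#|fE X| + #|nd| * 2)%N%:R - (2 * #|fV X|)%N%:R :> rat.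
  rewrite sumrB -natr_sum sum_fdeg card_loopE sumr_const /=.
  by rewrite natrM mulr_natr.
have ge : 0 <= frank (@attach_loops X nd) - 1.
  rewrite /frank /= card_loopE.
  have : ((2 * #|fV X|)%N%:R <= (#|fE X| + #|nd| * 2)%N%:R :> rat) by rewrite ler_nat.
  rewrite !natrD !natrM; lra.
split.
  by rewrite /CTbar /frankbar eCT.
rewrite /frankbar esum max_l //.
rewrite /frank /= card_loopE !natrD !natrM; by field.
Qed.

Lemma deg_ge2 (G : group) (T : sgraph) (a : gaction G T) (H : G -> Prop)
    (S : sV T -> Prop) (X : fingraphT) (pV : sV T -> fV X) (pE : sE T -> fE X)
    (nd : pred (fV X)) :
  is_group G -> is_tree T -> is_action a -> without_inversions a ->
  is_subgroup H ->
  minimal_invariant_subtree a H S ->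
  is_quotient a H S pV pE ->
  (forall x, nd x <-> exists v, S v /\ pV v = x /\ ~ degenerate a H S v) ->
  forall x, ~~ nd x -> (1 < fdeg x)%N.
Proof.
move=> [gA g1l g1r gVl gVr] [[bb bne] _ _] [a1v [a1e [amv [ame [ao abar]]]]]
  winv [H1 HM HV] [[[_ subS] invS] minS] [qo [qbar [qsV [qsE [qV qE]]]]] hnd x ndx.
rewrite ltnNge; apply/negP => hle.
have [v [Sv pvx]] := qsV x.
have degv : degenerate a H S v.
  apply: NNPP => nondeg; move/negP: ndx; apply; apply/(proj2 (hnd x)).
  by exists v.
case: degv => e [[Soe Ste] [oe stab]].
have se : sub_edge S e by split.
have hE : forall f, fo f = x -> f = pE e.
  move=> f fx; move/card_le1_eqP: hle; apply; rewrite inE;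
    first [by rewrite fx | by rewrite qo // oe pvx].
have uq : forall y f f3, S y -> pV y = x -> sub_edge S f -> sub_edge S f3 ->
    so f = y -> so f3 = y -> f = f3.
  move=> y f1 f3 Sy py sf sf3 ofe ofe3.
  have [h [Hh he]] : exists h, H h /\ actE a h e = f1.
    apply/(qE _ _ sf se); apply: hE; by rewrite qo // ofe py.
  have [h' [Hh' he']] : exists h, H h /\ actE a h e = f3.
    apply/(qE _ _ sf3 se); apply: hE; by rewrite qo // ofe3 py.
  have hv : actV a h v = y by rewrite -oe ao he.
  have hv' : actV a h' v = y by rewrite -oe ao he'.
  have Hg : H (gmul (ginv h') h) := HM _ _ (HV _ Hh') Hh.
  have gv : actV a (gmul (ginv h') h) v = v.
    by rewrite amv hv -hv' -amv gVl a1v.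
  have ge : actE a (gmul (ginv h') h) e = e by apply/(stab _ Hg).
  have hg : h = gmul h' (gmul (ginv h') h) by rewrite gA gVr g1l.
  by rewrite -he -he' hg ame ge.
have ste_bad : pV (sterm e) <> x.
  move=> px.
  have [g [Hg gv]] : exists g, H g /\ actV a g v = sterm e.
    by apply/(qV _ _ Ste Sv); rewrite px pvx.
  apply: (winv g e); apply: (uq (sterm e)) => //.
  - split; first by rewrite -ao; apply: invS.
    by rewrite /sterm -abar -ao; apply: invS.
  - by split => //; rewrite /sterm bb.
  - by rewrite -ao oe gv.
pose S' := fun w => S w /\ pV w <> x.
have key : forall n p u w, (size p <= n)%N -> epath u w p ->
    all_prop (sub_edge S) p -> S' u -> S' w ->
    exists q, epath u w q /\ all_prop (sub_edge S') q.
  elim=> [|n IH] [|f p] u w //=.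
  - by move=> _ uw _ _ _; exists nil.
  - by move=> _ uw _ _ _; exists nil.
  move=> sz [ofe ep] [sf ap] S'u S'w.
  case: (classic (pV (sterm f) = x)) => bad.
  - case: p sz ep ap => [|f2 p] sz ep ap.
      by case: S'w; rewrite -ep.
    case: ep => [o2 ep]; case: ap => [sf2 ap].
    have f2e : f2 = sbar f.
      apply: (uq (sterm f)) => //; first by case: sf.
      by case: sf => sf1 sf2'; split => //; rewrite /sterm bb.
    move: ep; rewrite f2e /sterm bb ofe => ep.
    apply: (IH p) => //.
    by move: sz; rewrite /= ltnS => /ltnW.
  - have [q [eq aq]] := IH p (sterm f) w sz ep ap (conj (proj2 sf) bad) S'w.
    exists (f :: q); split; first by split.
    split => //; split; first by rewrite ofe.
    exact: (conj (proj2 sf) bad).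
have inv' : invariant_subtree a H S'.
  split; last first.
    move=> h w Hh [Sw pw]; split; first by apply: invS.
    move=> phw; apply: pw; rewrite -phw; symmetry.
    by apply/(qV _ _ (invS _ _ Hh Sw) Sw); exists h.
  split; first by exists (sterm e); split.
  move=> u w S'u S'w.
  have [p [ep ap]] := subS u w (proj1 S'u) (proj1 S'w).
  exact: (key (size p) p).
have := minS S' inv' (fun w (h : S' w) => proj1 h) v Sv.
by case=> _ /(_ pvx).
Qed.

Theorem lemma3p1 (G : group) (T : sgraph) (a : gaction G T) (H : G -> Prop)
    (S : sV T -> Prop) (X : fingraphT) (pV : sV T -> fV X) (pE : sE T -> fE X)
    (nd : pred (fV X)) :
  is_group G -> is_tree T -> is_action a -> without_inversions a ->
  is_subgroup H -> (exists h, H h /\ hyperbolic a h) ->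
  minimal_invariant_subtree a H S ->
  is_quotient a H S pV pE ->
  (forall x, nd x <-> exists v, S v /\ pV v = x /\ ~ degenerate a H S v) ->
  @CTbar X nd = frankbar (@attach_loops X nd) /\
  frankbar (@attach_loops X nd) =
    2^-1 * \sum_(x : fV (@attach_loops X nd)) ((fdeg x)%:R - 2).
Proof.
move=> hG hT ha hw hH _ hmin hq hnd.
have hd := @deg_ge2 G T a H S X pV pE nd hG hT ha hw hH hmin hq hnd.
exact: (@alg_part X nd hd).
Qed.
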